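(* Let $n\ge1$, $q$ a prime power, and $\mathcal{F}$ a covering of $[n]$ with no redundant basic set and with exactly two connected components. Then the $\mathcal{F}$-combinatorial metric satisfies the MacWilliams Extension Property if and only if $\mathcal{F}$ is a $k$-partition of $[n]$ for some $k$.
   Context: For a covering $\mathcal{F}$ of $[n]$ (subsets called basic sets, union $[n]$) and $x\in\mathbb{F}_q^n$, $\mathrm{wt}_{\mathcal{F}}(x)=\min\{|\mathcal{A}|:\mathcal{A}\subset\mathcal{F},\ \mathrm{supp}(x)\subset\bigcup_{A\in\mathcal{A}}A\}$ with $\mathrm{supp}(x)=\{i:x_i\ne0\}$, and $d_{\mathcal{F}}(x,y)=\mathrm{wt}_{\mathcal{F}}(x-y)$. A basic set is redundant if properly contained in another. $\mathcal{F}$ is a $k$-partition if it is a partition of $[n]$ with all blocks of cardinality $k$. A subfamily $\mathcal{S}\subset\mathcal{F}$ is connected if it cannot be written as $\mathcal{A}\cup\mathcal{B}$ with $\mathcal{A},\mathcal{B}$ nonempty and $A\cap B=\emptyset$ for all $A\in\mathcal{A},B\in\mathcal{B}$; connected components are maximal connected subfamilies. A local $\mathcal{F}$-equivalence between linear codes $\mathcal{C}_1,\mathcal{C}_2\subset\mathbb{F}_q^n$ is a linear map $t:\mathcal{C}_1\to\mathcal{C}_2$ preserving $\mathrm{wt}_{\mathcal{F}}$. The metric satisfies the MacWilliams Extension Property if for all linear codes $\mathcal{C}_1,\mathcal{C}_2$ every local $\mathcal{F}$-equivalence $t$ extends to a linear isometry $T$ of $(\mathbb{F}_q^n,d_{\mathcal{F}})$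 with $T|_{\mathcal{C}_1}=t$. *)

(* Defs.v *)
From HB Require Import structures.
From mathcomp Require Import all_boot all_order all_algebra.
Set Implicit Arguments. Unset Strict Implicit. Unset Printing Implicit Defensive.
Import GRing.Theory.
Local Open Scope ring_scope.

Section CombMetric.
Variables (K : finFieldType) (n : nat).

Definition supp (x : 'rV[K]_n) : {set 'I_n} := [set i | x 0 i != 0].

Definition is_covering (F : {set {set 'I_n}}) : bool := cover F == [set: 'I_n].

Definition no_redundant (F : {set {set 'I_n}}) : bool :=
  [forall A in F, forall B in F, ~~ (A \proper B)].

(* F-weight: min #|A| over subfamilies A of F covering supp x.
   (The default value #|F| is attained by A = F when F is a covering.) *)
Definition wtF (F : {set {set 'I_n}}) (x : 'rV[K]_n) : nat :=
  \big[minn/#|F|]_(A : {set {set 'I_n}} |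
        (A \subset F) && (supp x \subset \bigcup_(B in A) B)) #|A|.

Definition dF (F : {set {set 'I_n}}) (x y : 'rV[K]_n) : nat := wtF F (x - y).

Definition connectedF (S : {set {set 'I_n}}) : bool :=
  ~~ [exists A : {set {set 'I_n}}, exists B : {set {set 'I_n}},
        [&& A != set0, B != set0, A :|: B == S &
           [forall a in A, forall b in B, [disjoint a & b]]]].

Definition components (F : {set {set 'I_n}}) : {set {set {set 'I_n}}} :=
  [set S | maxset (fun S => (S \subset F) && connectedF S) S].

Definition k_partition (k : nat) (F : {set {set 'I_n}}) : Prop :=
  partition F [set: 'I_n] /\ forall B, B \in F -> #|B| = k.

(* t : C1 -> C2 is a local F-equivalence (t is given as a function on K^n,
   only its restriction to C1 matters). *)
Definition local_equiv (F : {set {set 'I_n}}) (C1 C2 : {vspace 'rV[K]_n})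
    (t : 'rV[K]_n -> 'rV[K]_n) : Prop :=
  [/\ forall x, x \in C1 -> t x \in C2,
      forall (a : K) x y, x \in C1 -> y \in C1 -> t (a *: x + y) = a *: t x + t y &
      forall x, x \in C1 -> wtF F (t x) = wtF F x].

Definition linear_isometry (F : {set {set 'I_n}}) (T : 'rV[K]_n -> 'rV[K]_n) : Prop :=
  [/\ forall (a : K) x y, T (a *: x + y) = a *: T x + T y,
      bijective T &
      forall x y, dF F (T x) (T y) = dF F x y].

Definition MacWilliams_EP (F : {set {set 'I_n}}) : Prop :=
  forall (C1 C2 : {vspace 'rV[K]_n}) (t : 'rV[K]_n -> 'rV[K]_n),
    local_equiv F C1 C2 t ->
    exists T, linear_isometry F T /\ forall x, x \in C1 -> T x = t x.

End CombMetric.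

(* Main.v *)
Require Import Defs.
From HB Require Import structures.
From mathcomp Require Import all_boot all_order all_algebra.
From mathcomp Require Import finfield.

Module P1.
Set Implicit Arguments. Unset Strict Implicit. Unset Printing Implicit Defensive.
Import GRing.Theory.
Local Open Scope ring_scope.

Section Basics.
Variables (K : finFieldType) (n : nat).
Implicit Types (F A : {set {set 'I_n}}).
Local Notation vec := 'rV[K]_n.

Lemma bigminn_le (I : finType) (P : pred I) (f : I -> nat) m j :
  P j -> (\big[minn/m]_(i | P i) f i <= f j)%N.
Proof.
move=> Pj; have: j \in index_enum I by rewrite mem_index_enum.
elim: (index_enum I) => // i r IH; rewrite big_cons in_cons.
case/orP => [/eqP <- | jr]; first by rewrite Pj geq_minl.
by case: (P i); [apply: leq_trans (geq_minr _ _) _|]; apply: IH.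
Qed.

Lemma bigminn_ex (I : finType) (P : pred I) (f : I -> nat) m :
  \big[minn/m]_(i | P i) f i = m \/ exists2 i, P i & \big[minn/m]_(i | P i) f i = f i.
Proof.
elim: (index_enum I) => [|i r IH]; first by left; rewrite big_nil.
rewrite big_cons; case Pi: (P i) => //.
case: (leqP (f i) (\big[minn/m]_(j <- r | P j) f j)) => H.
  by right; exists i => //; apply/minn_idPl.
exact: IH.
Qed.

Lemma in_supp (x : vec) i : (i \in supp x) = (x 0 i != 0).
Proof. by rewrite inE. Qed.

Lemma supp0 : supp (0 : vec) = set0.
Proof. by apply/setP => i; rewrite in_supp mxE eqxx inE. Qed.

Lemma supp_eq0 (x : vec) : supp x \subset set0 -> x = 0.
Proof.
move=> /subsetP H; apply/rowP => i; rewrite mxE.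
case: (eqVneq (x 0 i) 0) => // /negbTE nz.
by have := H i; rewrite in_supp nz inE => /(_ isT).
Qed.

Lemma suppZ (a : K) (x : vec) : a != 0 -> supp (a *: x) = supp x.
Proof. by move=> a0; apply/setP => i; rewrite !in_supp mxE mulf_eq0 negb_or a0. Qed.

Lemma suppN (x : vec) : supp (- x) = supp x.
Proof. by apply/setP => i; rewrite !in_supp mxE oppr_eq0. Qed.

Lemma wt_supp F (x y : vec) : supp x = supp y -> wtF F x = wtF F y.
Proof. by move=> e; rewrite /wtF e. Qed.

Lemma wt_le F (x : vec) A : A \subset F ->
  supp x \subset \bigcup_(B in A) B -> (wtF F x <= #|A|)%N.
Proof. by move=> AF sx; apply: bigminn_le; rewrite AF sx. Qed.

Lemma wt_ex F (x : vec) : is_covering F ->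
  exists A, [/\ A \subset F, supp x \subset \bigcup_(B in A) B & wtF F x = #|A|].
Proof.
move=> /eqP cov; case: (bigminn_ex (fun A : {set {set 'I_n}} =>
   (A \subset F) && (supp x \subset \bigcup_(B in A) B)) (fun A => #|A|) #|F|).
  move=> e; exists F; split => //; by rewrite -/(cover F) cov subsetT.
by case=> A /andP[h1 h2] e; exists A; split.
Qed.

Lemma wt0 F : wtF F (0 : vec) = 0%N.
Proof.
apply/eqP; rewrite -leqn0.
have := @wt_le F 0 set0; rewrite cards0; apply; first exact: sub0set.
by rewrite supp0 sub0set.
Qed.

Lemma wt_eq0 F (x : vec) : is_covering F -> wtF F x = 0%N -> x = 0.
Proof.
move=> cov e; have [A [AF sx wA]] := wt_ex x cov.
move: wA; rewrite e => /esym/eqP; rewrite cards_eq0 => /eqP A0.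
by apply: supp_eq0; move: sx; rewrite A0 big_set0.
Qed.

Lemma wt_le1 F (x : vec) : is_covering F -> (exists D, D \in F) ->
  (wtF F x <= 1)%N <-> exists2 D, D \in F & supp x \subset D.
Proof.
move=> cov [D0 D0F]; split.
  have [A [AF sx ->]] := wt_ex x cov.
  rewrite leq_eqVlt ltnS leqn0 cards_eq0; case/orP.
    case/cards1P => D AD; exists D; first by move/subsetP: AF; apply; rewrite AD set11.
    by move: sx; rewrite AD big_set1.
  move/eqP => A0; exists D0 => //; move: sx; rewrite A0 big_set0.
  by move=> /subset_trans; apply; apply: sub0set.
case=> D DF sD; rewrite -(cards1 D); apply: wt_le; first by rewrite sub1set.
by rewrite big_set1.
Qed.

End Basics.

End P1.
Import P1.

Module P2.
Set Implicit Arguments. Unset Strict Implicit. Unset Printing Implicit Defensive.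

Section Comp.
Variables (n : nat) (F : {set {set 'I_n}}).
Implicit Types (S A B : {set {set 'I_n}}) (D a b : {set 'I_n}).

Lemma comp_sub S : S \in components F -> S \subset F /\ connectedF S.
Proof. by rewrite inE => /maxsetP[/andP[]]. Qed.

Lemma cross_dis A B a b : [forall a in A, forall b in B, [disjoint a & b]] ->
  a \in A -> b \in B -> [disjoint a & b].
Proof. by move=> /forall_inP H aA bB; move/forall_inP: (H a aA); apply. Qed.

Lemma conn_split S a b : connectedF S -> a \in S -> b \in S -> a != b ->
  exists a', exists b', [/\ a' \in S, b' \in S, a' != b' & ~~ [disjoint a' & b']].
Proof.
move=> conn aS bS ab.
case: (boolP [exists a', exists b', [&& a' \in S, b' \in S, a' != b' & ~~ [disjoint a' & b']]]).
  by case/existsP => a' /existsP[b' /and4P[h1 h2 h3 h4]]; exists a', b'.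
move=> H; exfalso; move/negP: conn; apply; apply/existsP; exists [set a].
apply/existsP; exists (S :\ a); apply/and4P; split.
- by apply/set0Pn; exists a; rewrite set11.
- by apply/set0Pn; exists b; rewrite !inE eq_sym ab bS.
- by rewrite setD1K.
apply/forall_inP => a1; rewrite inE => /eqP ->; apply/forall_inP => b1.
rewrite !inE => /andP[b1a b1S].
move/existsPn: H => /(_ a) /existsPn /(_ b1).
by rewrite aS b1S eq_sym b1a /= negbK.
Qed.

Lemma comp_sep S a b : S \in components F -> a \in S -> b \in F -> b \notin S ->
  [disjoint a & b].
Proof.
rewrite inE => /maxsetP[/andP[SF Sconn] Smax] aS bF bS.
apply/negPn/negP => ab.
suff e : b |: S = S by move/negP: bS; apply; rewrite -e setU11.
apply: Smax; last exact: subsetUr.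
rewrite subUset sub1set bF SF /=.
apply/negP => /existsP[A /existsP[B /and4P[An0 Bn0 /eqP AB cross]]].
have aAB : a \in A :|: B by rewrite AB setU1r.
case: (eqVneq (A :&: S) set0) => [AS0|AS0]; last case: (eqVneq (B :&: S) set0) => [BS0|BS0].
- have aB : a \in B.
    move: aAB; rewrite inE; case/orP => // aA.
    by move: AS0 => /setP /(_ a); rewrite !inE aA aS.
  case/set0Pn: An0 => a1 a1A.
  have : a1 \in b |: S by rewrite -AB inE a1A.
  rewrite !inE; case/orP => [/eqP e|a1S].
    by move: ab; rewrite -e disjoint_sym (cross_dis cross a1A aB).
  by move: AS0 => /setP /(_ a1); rewrite !inE a1A a1S.
- have aA : a \in A.
    move: aAB; rewrite inE; case/orP => // aB.
    by move: BS0 => /setP /(_ a); rewrite !inE aB aS.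
  case/set0Pn: Bn0 => b1 b1B.
  have : b1 \in b |: S by rewrite -AB inE b1B orbT.
  rewrite !inE; case/orP => [/eqP e|b1S].
    by move: ab; rewrite -e (cross_dis cross aA b1B).
  by move: BS0 => /setP /(_ b1); rewrite !inE b1B b1S.
move/negP: Sconn; apply; apply/existsP; exists (A :&: S); apply/existsP; exists (B :&: S).
apply/and4P; split => //.
  by rewrite -setIUl AB; apply/eqP/setIidPr; apply: subsetUr.
apply/forall_inP => a1; rewrite inE => /andP[a1A _]; apply/forall_inP => b1.
by rewrite inE => /andP[b1B _]; apply: cross_dis cross a1A b1B.
Qed.

Lemma conn1 D : D != set0 -> connectedF [set D].
Proof.
move=> D0; apply/negP => /existsP[A /existsP[B /and4P[An0 Bn0 /eqP AB cross]]].
have inD : forall X : {set {set 'I_n}}, X \subset [set D] -> X != set0 -> D \in X.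
  move=> X XD /set0Pn[x xX]; move/subsetP: XD => /(_ x xX); rewrite inE => /eqP <- //.
have DA : D \in A by apply: inD An0; rewrite -AB subsetUl.
have DB : D \in B by apply: inD Bn0; rewrite -AB subsetUr.
have := cross_dis cross DA DB; rewrite -setI_eq0 setIid => /eqP e.
by move: D0; rewrite e eqxx.
Qed.

Lemma comp_exists D : D \in F -> D != set0 -> exists2 S, S \in components F & D \in S.
Proof.
move=> DF D0.
have H : (fun S => (S \subset F) && connectedF S) [set D] by rewrite /= sub1set DF conn1.
have [S maxS DS] := @maxset_exists _ (fun S => (S \subset F) && connectedF S) [set D] H.
by exists S; [rewrite inE | rewrite -sub1set].
Qed.

Lemma two_blocks : (forall D, D \in F -> D != set0) -> (exists D, D \in F) ->
  #|components F| = 2 ->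
  (forall S, S \in components F -> forall a b, a \in S -> b \in S -> a = b) ->
  exists B1 : {set 'I_n}, exists B2 : {set 'I_n}, [/\ B1 != B2, F = [set B1; B2] & [disjoint B1 & B2]].
Proof.
move=> Fn0 [D0 D0F] /eqP /cards2P[S1 [S2 [S12 eC]]] one.
have single : forall S, S \in components F -> exists2 B, S = [set B] & B \in F.
  move=> S SC; case: (eqVneq S set0) => [S0|/set0Pn[B BS]].
  - exfalso.
    have [S' S'C D0S'] := comp_exists D0F (Fn0 _ D0F).
    move: S'C SC; rewrite !inE => /maxsetP[/andP[S'F S'c] _] /maxsetP[_ Smax].
    have := Smax S'; rewrite S'F S'c S0 sub0set => /(_ isT isT) => e.
    by move: D0S'; rewrite e inE.
  exists B; last by have [SF _] := comp_sub SC; move/subsetP: SF; apply.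
  apply/setP => x; rewrite inE; apply/idP/eqP => [xS|->//]; exact: one SC x B xS BS.
have S1C : S1 \in components F by rewrite eC set21.
have S2C : S2 \in components F by rewrite eC set22.
have [B1 e1 B1F] := single _ S1C; have [B2 e2 B2F] := single _ S2C.
have B12 : B1 != B2 by apply: contraNneq S12; rewrite e1 e2 => ->.
exists B1, B2; split => //.
  apply/setP => D; rewrite !inE; apply/idP/idP => [DF|/orP[]/eqP-> //].
  have [S SC DS] := comp_exists DF (Fn0 _ DF).
  by move: SC; rewrite eC !inE => /orP[]/eqP SS; move: DS; rewrite SS ?e1 ?e2 inE => ->; rewrite ?orbT.
apply: (comp_sep S1C); rewrite ?e1 ?inE ?set11 //; apply: contra B12; by rewrite eq_sym.
Qed.

End Comp.

End P2.
Import P2.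

Module P3.
Set Implicit Arguments. Unset Strict Implicit. Unset Printing Implicit Defensive.
Import GRing.Theory.
Local Open Scope ring_scope.

Section CaseB.
Variables (K : finFieldType) (n : nat).
Local Notation vec := 'rV[K]_n.
Implicit Types (F S : {set {set 'I_n}}) (A B C D : {set 'I_n}).

Definition ind (X : {set 'I_n}) : vec := \row_j (if j \in X then 1 else 0).

Lemma indE X j : ind X 0 j = if j \in X then 1 else 0.
Proof. by rewrite mxE. Qed.

Lemma supp_ind X : supp (ind X) = X.
Proof. by apply/setP => j; rewrite in_supp indE; case: (j \in X); rewrite ?oner_eq0 ?eqxx. Qed.

Lemma iso_props F (T : vec -> vec) : linear_isometry F T ->
  [/\ T 0 = 0, forall u v, T (u + v) = T u + T v,
      forall v, wtF F (T v) = wtF F v & injective T].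
Proof.
case=> lin bij iso.
have T0 : T 0 = 0.
  have := lin 1 0 0; rewrite !scale1r addr0 => e.
  have : T 0 + T 0 = T 0 + 0 by rewrite addr0 -e.
  by move/addrI.
split => //.
- by move=> u v; rewrite -{1}[u]scale1r lin scale1r.
- by move=> v; have := iso v 0; rewrite /dF T0 !subr0.
exact: bij_inj.
Qed.

Lemma use_MEP F (x y : vec) j : MacWilliams_EP K F -> x 0 j = 1 ->
  (forall k : K, wtF F (k *: x) = wtF F (k *: y)) ->
  exists T, linear_isometry F T /\ T x = y.
Proof.
move=> MEP xj1 wxy.
have [|T [isoT eT]] := MEP <[x]>%VS <[y]>%VS (fun v => v 0 j *: y).
  split.
  - by move=> v _; rewrite memvZ // memv_line.
  - by move=> a u v _ _; rewrite !mxE scalerDl scalerA.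
  by move=> v /vlineP[k ->]; rewrite mxE xj1 mulr1 wxy.
by exists T; split => //; rewrite eT ?memv_line // xj1 scale1r.
Qed.

Lemma nr_eq F X Y : no_redundant F -> X \in F -> Y \in F -> X \subset Y -> X = Y.
Proof.
move=> /forall_inP nr XF YF XY; have := forall_inP (nr X XF) Y YF.
by rewrite properE XY /= negbK => YX; apply/eqP; rewrite eqEsubset XY YX.
Qed.

Lemma wt_scale_eq F (x y : vec) : is_covering F -> wtF F x = wtF F y ->
  forall k : K, wtF F (k *: x) = wtF F (k *: y).
Proof.
move=> cov e k; case: (eqVneq k 0) => [->|k0]; first by rewrite !scale0r.
by rewrite (wt_supp F (suppZ x k0)) (wt_supp F (suppZ y k0)).
Qed.

Lemma caseb F S A B C c :
  is_covering F -> no_redundant F ->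
  A \in F -> B \in F -> A != B -> ~~ [disjoint A & B] -> C \in F -> c \in C ->
  A \in S -> C \notin S ->
  (forall D1 D2, D1 \in F -> D2 \in F -> D1 \in S -> D2 \notin S -> [disjoint D1 & D2]) ->
  MacWilliams_EP K F -> False.
Proof.
move=> cov nr AF BF AB AB0 CF cC AS CS sep MEP.
have Fne : exists D, D \in F by exists A.
have [a aAB] : exists a, a \in A :&: B by apply/set0Pn; rewrite setI_eq0.
have [aA aB] : a \in A /\ a \in B by move: aAB; rewrite inE => /andP.
have [i iA iB] : exists2 i, i \in A & i \notin B.
  apply/subsetPn; apply/negP => sAB; move/negP: AB; apply; apply/eqP.
  exact: nr_eq nr AF BF sAB.
have cA : c \notin A by apply/negP => cA; have := disjointFr (sep _ _ AF CF AS CS) cA; rewrite cC.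
pose x := ind (A :|: B).
pose y := ind A + ind [set c].
have yE : forall j, y 0 j = (if j \in A then 1 else 0) + (if j == c then 1 else 0).
  by move=> j; rewrite !mxE inE.
have suppy : supp y = A :|: [set c].
  apply/setP => j; rewrite in_supp yE !inE.
  case: (eqVneq j c) => [->|jc]; first by rewrite (negPf cA) add0r oner_eq0 orbT.
  by rewrite addr0 orbF; case: (j \in A); rewrite ?oner_eq0 ?eqxx.
have wt2 : forall v : vec, forall D1 D2, D1 \in F -> D2 \in F ->
    supp v \subset D1 :|: D2 -> ~~ (wtF F v <= 1)%N -> wtF F v = 2%N.
  move=> v D1 D2 D1F D2F sv n1; apply/eqP; rewrite eqn_leq ltnNge n1 andbT.
  apply: leq_trans (wt_le (A := [set D1; D2]) _ _) _.
  - by apply/subsetP => D; rewrite !inE => /orP[]/eqP->.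
  - apply/subsetP => j /(subsetP sv); rewrite inE => /orP[] jD; apply/bigcupP.
      by exists D1; rewrite ?inE ?eqxx.
    by exists D2; rewrite ?inE ?eqxx ?orbT.
  by rewrite cards2; case: (D1 != D2).
have wx : wtF F x = 2%N.
  apply: (wt2 _ A B) => //; first by rewrite supp_ind.
  apply/negP => /(wt_le1 x cov Fne) [D DF]; rewrite supp_ind subUset => /andP[sA sB].
  have eAD := nr_eq nr AF DF sA; move: sB; rewrite -eAD => sBA.
  by move/negP: AB; apply; apply/eqP; rewrite (nr_eq nr BF AF sBA).
have wy : wtF F y = 2%N.
  apply: (wt2 _ A C) => //.
    by rewrite suppy setUS // sub1set.
  apply/negP => /(wt_le1 y cov Fne) [D DF]; rewrite suppy subUset sub1set => /andP[sA cD].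
  case: (boolP (D \in S)) => DS.
    by have := disjointFr (sep _ _ DF CF DS CS) cD; rewrite cC.
  have := disjointFr (sep _ _ AF DF AS DS) aA; by rewrite (subsetP sA).
have xa1 : x 0 a = 1 by rewrite indE inE aA.
have [T [isoT Txy]] := use_MEP MEP xa1 (wt_scale_eq cov (etrans wx (esym wy))).
have [T0 Tadd Twt Tinj] := iso_props isoT.
have ylem : forall w, (wtF F w <= 1)%N -> (wtF F (y + w) <= 1)%N ->
    w = - ind A \/ w = - ind [set c].
  move=> w /(wt_le1 w cov Fne)[D1 D1F s1] /(wt_le1 _ cov Fne)[D2 D2F s2].
  have P1 : forall j, j \notin D1 -> w 0 j = 0.
    move=> j jD; apply/eqP; apply/negPn/negP => wj; move/negP: jD; apply.
    by apply: (subsetP s1); rewrite in_supp.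
  have P2 : forall j, j \notin D2 -> y 0 j + w 0 j = 0.
    move=> j jD; apply/eqP; apply/negPn/negP => wj; move/negP: jD; apply.
    by apply: (subsetP s2); rewrite in_supp mxE.
  have ac : (a == c) = false by apply/negbTE; apply: contraNneq cA => <-.
  case: (boolP (D1 \in S)) => D1S; case: (boolP (D2 \in S)) => D2S.
  - exfalso.
    have cD1 : c \notin D1 by rewrite (disjointFl (sep _ _ D1F CF D1S CS) cC).
    have cD2 : c \notin D2 by rewrite (disjointFl (sep _ _ D2F CF D2S CS) cC).
    have := P2 c cD2; rewrite P1 // addr0 yE (negPf cA) eqxx add0r => /eqP.
    by rewrite oner_eq0.
  - left; apply/rowP => j; rewrite mxE indE.
    have cD1 : c \notin D1 by rewrite (disjointFl (sep _ _ D1F CF D1S CS) cC).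
    have cD2 : c \in D2.
      apply/negPn/negP => cD2; have := P2 c cD2; rewrite P1 // addr0 yE (negPf cA) eqxx add0r.
      by move/eqP; rewrite oner_eq0.
    case: (boolP (j \in D2)) => jD2.
      rewrite P1; last by rewrite (disjointFl (sep _ _ D1F D2F D1S D2S) jD2).
      by rewrite (disjointFl (sep _ _ AF D2F AS D2S) jD2) oppr0.
    have jc : (j == c) = false by apply/negbTE; apply: contraNneq jD2 => ->.
    have := P2 j jD2; rewrite yE jc addr0 => /eqP; rewrite addrC addr_eq0 => /eqP //.
  - right; apply/rowP => j; rewrite mxE indE inE.
    case: (boolP (j \in D2)) => jD2.
      rewrite P1; last by rewrite (disjointFr (sep _ _ D2F D1F D2S D1S) jD2).
      have jc : (j == c) = false.
        apply/negbTE; apply: contraTneq jD2 => ->.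
        by rewrite (disjointFl (sep _ _ D2F CF D2S CS) cC).
      by rewrite jc oppr0.
    have := P2 j jD2; rewrite yE.
    case: (boolP (j \in A)) => jA.
      have jc : (j == c) = false by apply/negbTE; apply: contraNneq cA => <-.
      rewrite jc P1; last by rewrite (disjointFr (sep _ _ AF D1F AS D1S) jA).
      by rewrite !addr0 => /eqP; rewrite oner_eq0.
    by rewrite add0r => /eqP; rewrite addrC addr_eq0 => /eqP.
  - exfalso.
    have aD1 : a \notin D1 by rewrite (disjointFr (sep _ _ AF D1F AS D1S) aA).
    have aD2 : a \notin D2 by rewrite (disjointFr (sep _ _ AF D2F AS D2S) aA).
    have := P2 a aD2; rewrite P1 // addr0 yE aA ac addr0 => /eqP.
    by rewrite oner_eq0.
have key : forall z D E, D \in F -> E \in F -> supp z \subset D ->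
    supp (x + z) \subset E -> T z = - ind A \/ T z = - ind [set c].
  move=> z D E DF EF sz sxz; apply: ylem.
    by rewrite Twt; apply/(wt_le1 z cov Fne); exists D.
  by rewrite -Txy -Tadd Twt; apply/(wt_le1 _ cov Fne); exists E.
pose z1 := - ind (A :\: B); pose z2 := - ind (B :\: A); pose z3 := - ind A.
have e1 : x + z1 = ind B.
  apply/rowP => j; rewrite !mxE !inE.
  by case: (j \in A); case: (j \in B); rewrite /= ?subrr ?oppr0 ?addr0.
have e2 : x + z2 = ind A.
  apply/rowP => j; rewrite !mxE !inE.
  by case: (j \in A); case: (j \in B); rewrite /= ?subrr ?oppr0 ?addr0.
have e3 : x + z3 = ind (B :\: A).
  apply/rowP => j; rewrite !mxE !inE.
  by case: (j \in A); case: (j \in B); rewrite /= ?subrr ?oppr0 ?addr0.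
have k1 : T z1 = - ind A \/ T z1 = - ind [set c].
  by apply: (key _ A B AF BF); [rewrite suppN supp_ind subsetDl | rewrite e1 supp_ind].
have k2 : T z2 = - ind A \/ T z2 = - ind [set c].
  by apply: (key _ B A BF AF); [rewrite suppN supp_ind subsetDl | rewrite e2 supp_ind].
have k3 : T z3 = - ind A \/ T z3 = - ind [set c].
  by apply: (key _ A B AF BF); [rewrite suppN supp_ind | rewrite e3 supp_ind subsetDl].
have neg10 : (-1 : K) <> 0 by move/eqP; rewrite oppr_eq0 oner_eq0.
have d12 : z1 <> z2.
  move/(congr1 (fun v : vec => v 0 i)); rewrite !mxE !inE iA (negPf iB) /= oppr0.
  exact: neg10.
have d13 : z1 <> z3.
  move/(congr1 (fun v : vec => v 0 a)); rewrite !mxE !inE aA aB /= oppr0.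
  by move/esym; exact: neg10.
have d23 : z2 <> z3.
  move/(congr1 (fun v : vec => v 0 i)); rewrite !mxE !inE iA (negPf iB) /= oppr0.
  by move/esym; exact: neg10.
case: k1 => f1; case: k2 => f2; case: k3 => f3;
  first [ by apply: d12; apply: Tinj; rewrite f1 f2
        | by apply: d13; apply: Tinj; rewrite f1 f3
        | by apply: d23; apply: Tinj; rewrite f2 f3 ].
Qed.

End CaseB.

End P3.
Import P3.

Module P4.
Set Implicit Arguments. Unset Strict Implicit. Unset Printing Implicit Defensive.
Import GRing.Theory.
Local Open Scope ring_scope.

Section WB.
Variables (K : finFieldType) (n : nat).
Local Notation vec := 'rV[K]_n.
Implicit Types (X B : {set 'I_n}) (F : {set {set 'I_n}}) (b d : 'I_n).

Definition etup (X : {set 'I_n}) : #|X|.-tuple vec :=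
  map_tuple (fun j => delta_mx 0 j) (enum_tuple X).

Definition WB (X : {set 'I_n}) : {vspace vec} := <<etup X>>%VS.

Lemma etupE X (i : 'I_#|X|) : (etup X)`_i = delta_mx 0 (enum_val i).
Proof.
rewrite /etup /= (nth_map (enum_default i)) //; last by rewrite -cardE ltn_ord.
Qed.

Lemma etup_free X : free (etup X).
Proof.
apply/freeP => k e i.
have := congr1 (fun v : vec => v 0 (enum_val i)) e.
rewrite summxE (bigD1 i) //= big1 ?addr0.
  by rewrite etupE !mxE !eqxx mulr1.
move=> l li; rewrite etupE !mxE eqxx /=.
by rewrite (inj_eq enum_val_inj) eq_sym (negPf li) mulr0.
Qed.

Lemma dimWB X : \dim (WB X) = #|X|.
Proof. by have /eqnP -> := etup_free X; rewrite size_tuple. Qed.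

Lemma memWB X (x : vec) : (x \in WB X) = (supp x \subset X).
Proof.
apply/idP/idP.
  move/coord_span => ->; apply/subsetP => j; apply: contraTT => jX.
  rewrite in_supp negbK summxE; apply/eqP; apply: big1 => i _.
  rewrite etupE !mxE eqxx /=; case: eqP => [e|]; last by rewrite mulr0.
  by move: jX; rewrite e enum_valP.
move=> sx; rewrite [x]row_sum_delta (bigID (mem X)) /= [X in _ + X]big1 ?addr0.
  apply: rpred_sum => j jX; apply: rpredZ; apply: memv_span.
  by apply/mapP; exists j; rewrite ?mem_enum.
move=> j jX; have -> : x 0 j = 0; last by rewrite scale0r.
by apply/eqP; apply: contraNT jX => xj; apply: (subsetP sx); rewrite in_supp.
Qed.

Lemma wt_one F (x : vec) D : is_covering F -> D \in F -> supp x \subset D ->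
  x != 0 -> wtF F x = 1%N.
Proof.
move=> cov DF sx x0; apply/eqP; rewrite eqn_leq.
have -> : (wtF F x <= 1)%N by apply/(wt_le1 x cov); [exists D | exists D].
by rewrite lt0n; apply: contra x0 => /eqP /(wt_eq0 cov) ->.
Qed.

Lemma casea F B1 B2 b d : is_covering F -> F = [set B1; B2] ->
  [disjoint B1 & B2] -> b \in B1 -> d \in B2 -> (#|B1| < #|B2|)%N ->
  MacWilliams_EP K F -> False.
Proof.
move=> cov eF dis bB1 dB2 lt MEP.
have B1F : B1 \in F by rewrite eF set21.
have B2F : B2 \in F by rewrite eF set22.
have Fne : exists D, D \in F by exists B1.
pose x := ind K [set d]; pose y := ind K [set b].
have ne : forall j : 'I_n, ind K [set j] != 0.
  move=> j; apply/negP => /eqP /(congr1 (fun v : vec => v 0 j)).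
  by rewrite indE inE eqxx mxE => /eqP; rewrite oner_eq0.
have xW : x \in WB B2 by rewrite memWB supp_ind sub1set.
have yW : y \in WB B1 by rewrite memWB supp_ind sub1set.
have wxy : wtF F x = wtF F y.
  rewrite (wt_one cov B2F _ (ne d)) ?(wt_one cov B1F _ (ne b)) //.
    by rewrite supp_ind sub1set.
  by rewrite supp_ind sub1set.
have xd1 : x 0 d = 1 by rewrite indE inE eqxx.
have [T [isoT Txy]] := use_MEP MEP xd1 (wt_scale_eq cov wxy).
have [T0 Tadd Twt Tinj] := iso_props isoT.
have inF : forall D, D \in F -> D = B1 \/ D = B2.
  by move=> D; rewrite eF !inE => /orP[]/eqP->; [left|right].
have TW : forall w, w \in WB B2 -> T w \in WB B1.
  move=> w wW.
  have /(wt_le1 _ cov Fne)[D DF sD] : (wtF F (T w) <= 1)%N.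
    by rewrite Twt; apply/(wt_le1 w cov Fne); exists B2; rewrite // -memWB.
  have /(wt_le1 _ cov Fne)[D' D'F sD'] : (wtF F (y + T w) <= 1)%N.
    rewrite -Txy -Tadd Twt; apply/(wt_le1 _ cov Fne); exists B2; rewrite // -memWB.
    exact: rpredD.
  case: (inF D DF) => eD; first by rewrite memWB -eD.
  case: (inF D' D'F) => eD'.
    have -> : T w = (y + T w) - y by rewrite addrC addKr.
    by apply: rpredB => //; rewrite memWB -eD'.
  exfalso.
  have : y \in WB B2.
    have -> : y = (y + T w) - T w by rewrite addrK.
    by apply: rpredB; rewrite memWB; [rewrite -eD' | rewrite -eD].
  by rewrite memWB supp_ind sub1set (disjointFr dis bB1).
have : (#|WB B2| <= #|WB B1|)%N.
  rewrite -(card_imset (mem (WB B2)) Tinj); apply: subset_leq_card.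
  by apply/subsetP => _ /imsetP[w wW ->]; apply: TW.
rewrite !card_vspace !dimWB leq_exp2l ?finNzRing_gt1 //.
by rewrite leqNgt lt.
Qed.

End WB.

End P4.
Import P4.

Module P5.
Set Implicit Arguments. Unset Strict Implicit. Unset Printing Implicit Defensive.
Import GRing.Theory.
Local Open Scope ring_scope.

Section Ext.
Variables (K : fieldType) (vT : vectType K).
Implicit Types (C U W : {vspace vT}).

Definition linon C (f : vT -> vT) :=
  forall (a : K) x y, x \in C -> y \in C -> f (a *: x + y) = a *: f x + f y.

Lemma linon0 C f : linon C f -> f 0 = 0.
Proof.
move=> lf; have := lf 1 0 0 (mem0v C) (mem0v C); rewrite !scale1r addr0 => e.
have : f 0 + f 0 = f 0 + 0 by rewrite addr0 -e.
by move/addrI.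
Qed.

Lemma linonB C f x y : linon C f -> x \in C -> y \in C -> f (x - y) = f x - f y.
Proof.
move=> lf xC yC.
have e1 : f (- y) = - f y.
  have := lf (-1) y 0 yC (mem0v C); rewrite addr0 (linon0 lf) addr0.
  by rewrite !scaleN1r.
have yN : - y \in C by rewrite rpredN.
by have := lf 1 x (- y) xC yN; rewrite !scale1r e1.
Qed.

Lemma linon_sum C f (I : Type) (r : seq I) (k : I -> K) (v : I -> vT) :
  linon C f -> (forall i, v i \in C) ->
  f (\sum_(i <- r) k i *: v i) = \sum_(i <- r) k i *: f (v i).
Proof.
move=> lf vC; elim: r => [|i r IH]; first by rewrite !big_nil (linon0 lf).
rewrite !big_cons lf ?IH //; last by apply: rpred_sum => j _; apply: rpredZ.
Qed.

Lemma basis_size U (s : seq vT) : basis_of U s -> size s = \dim U.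
Proof. by case/andP => /eqP <- /eqnP ->. Qed.

Lemma ext_basis U W (s : seq vT) : (U <= W)%VS -> basis_of U s ->
  basis_of W (s ++ vbasis (W :\: U)).
Proof.
move=> UW bs.
have e : (U + (W :\: U))%VS = W.
  by rewrite addvC -{2}(addv_diff_cap W U) (capv_idPr UW).
suff : basis_of (U + (W :\: U)) (s ++ vbasis (W :\: U)) by rewrite e.
apply: cat_basis => //; last exact: vbasisP.
by apply/directv_addP; rewrite capvC capv_diff.
Qed.

Lemma lin_span (g : {linear vT -> vT}) (s : seq vT) w : w \in <<s>>%VS ->
  g w = \sum_(i < size s) coord (in_tuple s) i w *: (map g s)`_i.
Proof.
move=> ws; rewrite {1}(coord_span (X := in_tuple s) ws) linear_sum; apply: eq_bigr => i _.
by rewrite linearZ (nth_map 0).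
Qed.

Lemma ext C W W' (al be : vT -> vT) :
  linon C al -> linon C be ->
  (forall x, x \in C -> al x \in W) -> (forall x, x \in C -> be x \in W') ->
  (forall x, x \in C -> (al x == 0) = (be x == 0)) ->
  \dim W = \dim W' ->
  exists g : {linear vT -> vT},
    [/\ forall w, w \in W -> g w \in W',
        forall w, w \in W -> g w = 0 -> w = 0 &
        forall x, x \in C -> g (al x) = be x].
Proof.
move=> lal lbe alW beW eq0 dimWW.
pose b := vbasis C.
have bC : forall i : 'I_(\dim C), b`_i \in C by move=> i; apply: vbasis_mem; apply: mem_nth; rewrite size_tuple.
pose U := <<map al b>>%VS.
have alU : forall x, x \in C -> al x \in U.
  move=> x xC; rewrite (coord_vbasis xC) (linon_sum _ _ lal) //.
  apply: rpred_sum => i _; apply: rpredZ; apply: memv_span.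
  by apply: map_f; apply: mem_nth; rewrite size_tuple.
have UW : (U <= W)%VS.
  by apply/span_subvP => _ /mapP[v vb ->]; apply: alW; apply: vbasis_mem.
have hU : forall u, u \in U -> exists2 x, x \in C & al x = u.
  move=> u uU; have := coord_span (X := map_tuple al b) uU => ->.
  exists (\sum_i coord (map_tuple al b) i u *: b`_i).
    by apply: rpred_sum => i _; apply: rpredZ.
  rewrite (linon_sum _ _ lal) //; apply: eq_bigr => i _.
  by rewrite /= (nth_map 0) // size_tuple.
pose X := vbasis U.
have : forall i : 'I_(\dim U), exists x, x \in C /\ al x = X`_i.
  move=> i; have iX : X`_i \in X by apply: mem_nth; rewrite size_tuple.
  have [x xC e] := hU X`_i (vbasis_mem iX).
  by exists x.
case/fin_all_exists => pr prP.
pose fX := [tuple be (pr i) | i < \dim U].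
have fXi : forall i : 'I_(\dim U), fX`_i = be (pr i) by move=> i; rewrite nth_mktuple.
have Xfree : free X := basis_free (vbasisP U).
have fXfree : free fX.
  apply/freeP => k e i.
  have sC : \sum_i k i *: pr i \in C by apply: rpred_sum => j _; apply: rpredZ; case: (prP j).
  have e1 : be (\sum_i k i *: pr i) == 0.
    rewrite (linon_sum _ _ lbe); last by move=> j; case: (prP j).
    by apply/eqP; rewrite -[RHS]e; apply: eq_bigr => j _; rewrite fXi.
  rewrite -(eq0 _ sC) (linon_sum _ _ lal) in e1; last by move=> j; case: (prP j).
  have := Xfree; move/freeP => Xf; apply: (Xf k).
  by rewrite -[RHS](eqP e1); apply: eq_bigr => j _; case: (prP j) => _ ->.
have fXW : (<<fX>> <= W')%VS.
  by apply/span_subvP => _ /mapP[i _ ->]; apply: beW; case: (prP i).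
pose BW := X ++ vbasis (W :\: U).
pose BW' := (fX : seq vT) ++ vbasis (W' :\: <<fX>>).
have bBW : basis_of W BW by apply: ext_basis; rewrite // vbasisP.
have bBW' : basis_of W' BW' by apply: ext_basis => //; rewrite /basis_of eqxx.
have szX : size X = \dim U by rewrite size_tuple.
have dimfX : \dim <<fX>> = \dim U by rewrite (eqnP fXfree) size_tuple.
have sz : size BW' = size BW by rewrite (basis_size bBW) (basis_size bBW') dimWW.
have [g gP] := linear_of_free BW BW'.
have gBW := gP (basis_free bBW) sz.
have gX : forall i : 'I_(\dim U), g X`_i = fX`_i.
  move=> i; have := congr1 (fun s => nth 0 s i) gBW.
  rewrite (nth_map 0) /BW /BW' ?nth_cat ?szX ?size_tuple ?ltn_ord //.
  by rewrite ltn_addr.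
have gW : forall w, w \in W -> g w = \sum_(i < size BW) coord (in_tuple BW) i w *: BW'`_i.
  by move=> w; rewrite -(span_basis bBW) => /lin_span ->; rewrite gBW.
exists g; split.
- move=> w /gW ->; apply: rpred_sum => i _; apply: rpredZ.
  apply: (basis_mem bBW'); apply: mem_nth; rewrite sz; exact: ltn_ord.
- move=> w wW gw0.
  have BW'free : free (map_tuple g (in_tuple BW)) by rewrite /= gBW; exact: basis_free bBW'.
  move/freeP: BW'free => c0.
  have hz : forall i, coord (in_tuple BW) i w = 0.
    apply: (c0 (fun i => coord (in_tuple BW) i w)).
    by rewrite -[RHS]gw0 (gW w wW); apply: eq_bigr => j _; rewrite /= gBW.
  move: wW; rewrite -(span_basis bBW) => /(coord_span (X := in_tuple BW)) ->.
  by apply: big1 => i _; rewrite hz scale0r.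
move=> x xC.
have axU := alU x xC.
pose c := fun i => coord X i (al x).
have eax : al x = \sum_i c i *: X`_i by apply: coord_vbasis.
have x'C : \sum_i c i *: pr i \in C by apply: rpred_sum => j _; apply: rpredZ; case: (prP j).
have eax' : al (\sum_i c i *: pr i) = al x.
  rewrite (linon_sum _ _ lal); last by move=> j; case: (prP j).
  by rewrite [RHS]eax; apply: eq_bigr => j _; case: (prP j) => _ ->.
have ebe : be x = be (\sum_i c i *: pr i).
  apply/eqP; rewrite -subr_eq0 -(linonB lbe) // -(eq0 _ (rpredB xC x'C)).
  by rewrite (linonB lal) // eax' subrr.
rewrite ebe (linon_sum _ _ lbe); last by move=> j; case: (prP j).
rewrite eax linear_sum; apply: eq_bigr => i _; by rewrite linearZ gX fXi.
Qed.

End Ext.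

End P5.
Import P5.

Module P6.
Set Implicit Arguments. Unset Strict Implicit. Unset Printing Implicit Defensive.
Import GRing.Theory.
Local Open Scope ring_scope.

Section Proj.
Variables (K : finFieldType) (n : nat).
Local Notation vec := 'rV[K]_n.
Implicit Types (X Y : {set 'I_n}) (x y u v : vec).

Definition P X x : vec := \row_j (if j \in X then x 0 j else 0).

Lemma PE X x j : P X x 0 j = if j \in X then x 0 j else 0.
Proof. by rewrite mxE. Qed.

Lemma P_lin X (a : K) x y : P X (a *: x + y) = a *: P X x + P X y.
Proof. by apply/rowP => j; rewrite !mxE; case: (j \in X); rewrite ?mulr0 ?addr0. Qed.

Lemma P_W X x : P X x \in WB K X.
Proof.
rewrite memWB; apply/subsetP => j; rewrite in_supp PE.
by case: (j \in X) => //; rewrite eqxx.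
Qed.

Definition compl X Y := [disjoint X & Y] /\ X :|: Y = setT.

Lemma P_split X Y x : compl X Y -> x = P X x + P Y x.
Proof.
case=> dis cov; apply/rowP => j; rewrite !mxE.
have : j \in X :|: Y by rewrite cov inE.
rewrite inE; case/orP => jin.
  by rewrite jin (disjointFr dis jin) addr0.
by rewrite jin (disjointFl dis jin) add0r.
Qed.

Lemma P_eq0 X Y x : compl X Y -> (P X x == 0) = (x \in WB K Y).
Proof.
case=> dis cov; rewrite memWB; apply/eqP/subsetP => [e j|s].
  rewrite in_supp => xj; have : j \in X :|: Y by rewrite cov inE.
  rewrite inE; case/orP => // jX.
  by move/eqP: xj; case; move: (congr1 (fun v : vec => v 0 j) e); rewrite PE jX mxE.
apply/rowP => j; rewrite PE mxE; case jX: (j \in X) => //.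
apply/eqP; apply: contraT => xj.
by have := s j; rewrite in_supp xj (disjointFr dis jX) => /(_ isT).
Qed.

Lemma P_id X x : x \in WB K X -> P X x = x.
Proof.
rewrite memWB => s; apply/rowP => j; rewrite PE; case jX: (j \in X) => //.
apply/esym/eqP; apply: contraT => xj.
by have := subsetP s j; rewrite in_supp xj jX => /(_ isT).
Qed.

Lemma P_0 X Y x : [disjoint X & Y] -> x \in WB K Y -> P X x = 0.
Proof.
move=> dis; rewrite memWB => s; apply/rowP => j; rewrite PE mxE; case jX: (j \in X) => //.
apply/eqP; apply: contraT => xj.
by have := subsetP s j; rewrite in_supp xj (disjointFr dis jX) => /(_ isT).
Qed.

Lemma WB_cap X Y x : [disjoint X & Y] -> x \in WB K X -> x \in WB K Y -> x = 0.
Proof. by move=> dis xX xY; rewrite -(P_id xX) (P_0 dis xY). Qed.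

End Proj.

End P6.
Import P6.

Module P7.
Set Implicit Arguments. Unset Strict Implicit. Unset Printing Implicit Defensive.
Import GRing.Theory.
Local Open Scope ring_scope.

Section TwoBlocks.
Variables (K : finFieldType) (n : nat) (B1 B2 : {set 'I_n}).
Local Notation vec := 'rV[K]_n.
Hypothesis dis : [disjoint B1 & B2].
Hypothesis cov : B1 :|: B2 = setT.
Hypothesis card12 : #|B1| = #|B2|.
Let F := [set B1; B2].
Local Notation W X := (WB K X).
Implicit Types (X Y : {set 'I_n}).

Definition Zb (v : vec) := (v \in W B1) || (v \in W B2).

Lemma covF : is_covering F.
Proof.
apply/eqP; rewrite /cover -cov; apply/setP => j; apply/bigcupP/idP.
  by case=> D; rewrite !inE => /orP[]/eqP-> jD; rewrite jD ?orbT.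
by rewrite inE => /orP[] jB; [exists B1 | exists B2]; rewrite ?inE ?eqxx ?orbT.
Qed.

Lemma Fne : exists D, D \in F.
Proof. by exists B1; rewrite !inE eqxx. Qed.

Lemma wt_le1Z v : (wtF F v <= 1)%N = Zb v.
Proof.
apply/idP/idP.
  by move/(wt_le1 v covF Fne) => [D]; rewrite !inE => /orP[]/eqP-> s;
    rewrite /Zb !memWB s ?orbT.
case/orP => vW; apply/(wt_le1 v covF Fne).
  by exists B1; rewrite ?inE ?eqxx // -memWB.
by exists B2; rewrite ?inE ?eqxx ?orbT // -memWB.
Qed.

Lemma wtE v : wtF F v = if v == 0 then 0%N else if Zb v then 1%N else 2%N.
Proof.
case: eqP => [->|v0]; first exact: wt0.
have nz : wtF F v != 0%N by apply/eqP => /(wt_eq0 covF).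
case: ifP => Zv.
  by apply/eqP; rewrite eqn_leq wt_le1Z Zv /= lt0n.
have le2 : (wtF F v <= 2)%N.
  have := @wt_le _ _ F v F (subxx _); rewrite cards2.
  move=> h; apply: leq_trans (h _) _; first by have /eqP e := covF; rewrite -/(cover F) e subsetT.
  by case: (B1 != B2).
apply/eqP; rewrite eqn_leq le2 /= ltnNge wt_le1Z Zv //.
Qed.

Lemma mixed u v X Y : (X == B1) && (Y == B2) || (X == B2) && (Y == B1) ->
  u \in W X -> u != 0 -> v \in W Y -> v != 0 -> ~~ Zb (u + v).
Proof.
have key : forall u v : vec, u \in W B1 -> u != 0 -> v \in W B2 -> v != 0 -> ~~ Zb (u + v).
  move=> {}u {}v uW u0 vW v0; rewrite /Zb negb_or; apply/andP; split; apply/negP => h.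
    have vW1 : v \in W B1.
      have -> : v = (u + v) - u by rewrite addrAC subrr add0r.
      by rewrite rpredB.
    by move/negP: v0; apply; apply/eqP; apply: (WB_cap dis).
  have uW2 : u \in W B2.
    have -> : u = (u + v) - v by rewrite addrK.
    by rewrite rpredB.
  by move/negP: u0; apply; apply/eqP; apply: (WB_cap dis).
case/orP => /andP[/eqP-> /eqP->] uW u0 vW v0; first exact: key.
by rewrite addrC; apply: key.
Qed.

Lemma wt_eq0b (v : vec) : (wtF F v == 0%N) = (v == 0).
Proof. by rewrite wtE; case: (v == 0) => //; case: (Zb v). Qed.

Section Inner.
Variables (C1 C2 : {vspace vec}) (t : vec -> vec).
Hypothesis le : @local_equiv K n F C1 C2 t.

Lemma le_props : [/\ linon C1 t, forall x, x \in C1 -> Zb (t x) = Zb x &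
  forall x, x \in C1 -> (t x == 0) = (x == 0)].
Proof.
case: le => _ lin wt; split.
- by move=> a x y xC yC; apply: lin.
- by move=> x xC; rewrite -!wt_le1Z wt.
by move=> x xC; rewrite -!wt_eq0b wt.
Qed.

Definition good E1 E2 := [forall x, (x \in C1) ==>
  ((x \in W B1) ==> (t x \in W E1)) && ((x \in W B2) ==> (t x \in W E2))].

Lemma good_or : good B1 B2 || good B2 B1.
Proof.
have [lt Zt t0] := le_props.
case: (boolP (good B1 B2)) => // /forallPn [x]; rewrite negb_imply => /andP[xC hx].
case: (boolP (good B2 B1)) => // /forallPn[y]; rewrite negb_imply => /andP[yC hy].
exfalso.
rewrite negb_and !negb_imply in hx; rewrite negb_and !negb_imply in hy.
have E : Zb (t x + t y) = Zb (x + y).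
  have := lt 1 x y xC yC; rewrite !scale1r => <-; apply: Zt; exact: rpredD.
have nz : forall z X, z \in C1 -> t z \notin W X -> z != 0 /\ t z != 0.
  move=> z X zC tz; split; last by apply: contra tz => /eqP->; rewrite mem0v.
  by apply: contra tz => /eqP ze; rewrite ze (linon0 lt) mem0v.
have o1 : forall z, z \in C1 -> z \in W B1 -> t z \notin W B1 -> t z \in W B2.
  by move=> z zC zW tz; have := Zt z zC; rewrite /Zb zW (negPf tz).
have o1' : forall z, z \in C1 -> z \in W B1 -> t z \notin W B2 -> t z \in W B1.
  by move=> z zC zW tz; have := Zt z zC; rewrite /Zb zW (negPf tz) orbF.
have o2 : forall z, z \in C1 -> z \in W B2 -> t z \notin W B1 -> t z \in W B2.
  by move=> z zC zW tz; have := Zt z zC; rewrite /Zb zW (negPf tz) orbT.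
have o2' : forall z, z \in C1 -> z \in W B2 -> t z \notin W B2 -> t z \in W B1.
  by move=> z zC zW tz; have := Zt z zC; rewrite /Zb zW (negPf tz) orbT orbF.
have p12 : (B1 == B1) && (B2 == B2) || (B1 == B2) && (B2 == B1) by rewrite !eqxx.
have p21 : (B2 == B1) && (B1 == B2) || (B2 == B2) && (B1 == B1) by rewrite !eqxx orbT.
case/orP: hx => /andP[xW txW]; case/orP: hy => /andP[yW tyW];
  have [x0 tx0] := nz _ _ xC txW; have [y0 ty0] := nz _ _ yC tyW.
- move: E; rewrite (negPf (mixed p21 (o1 _ xC xW txW) tx0 (o1' _ yC yW tyW) ty0)).
  by rewrite /Zb rpredD.
- move: E; rewrite (negPf (mixed p12 xW x0 yW y0)).
  by rewrite /Zb (rpredD (o1 _ xC xW txW) (o2 _ yC yW tyW)) orbT.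
- move: E; rewrite (negPf (mixed p21 xW x0 yW y0)).
  by rewrite /Zb (rpredD (o2' _ xC xW txW) (o1' _ yC yW tyW)).
move: E; rewrite (negPf (mixed p12 (o2' _ xC xW txW) tx0 (o2 _ yC yW tyW) ty0)).
by rewrite /Zb (rpredD xW yW) orbT.
Qed.

Lemma P_add X (u v : vec) : P X (u + v) = P X u + P X v.
Proof. by rewrite -{1}[u]scale1r P_lin scale1r. Qed.

Lemma P_sub X (u v : vec) : P X (u - v) = P X u - P X v.
Proof. by apply/rowP => j; rewrite !mxE; case: (j \in X); rewrite ?subrr. Qed.

Lemma P0 X : P X (0 : vec) = 0.
Proof. by apply/rowP => j; rewrite !mxE; case: (j \in X). Qed.

Lemma compl_sym X Y : compl X Y -> compl Y X.
Proof. by case=> d c; split; rewrite 1?disjoint_sym // setUC. Qed.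

Lemma build (E1 E2 : {set 'I_n}) : compl B1 B2 -> compl E1 E2 -> #|B1| = #|E1| -> #|B2| = #|E2| ->
  (forall v, Zb v = (v \in W E1) || (v \in W E2)) -> good E1 E2 ->
  exists T, linear_isometry F T /\ forall x, x \in C1 -> T x = t x.
Proof.
move=> hB hE c1 c2 hZ gd.
have [lt Zt t0] := le_props.
have hB' := compl_sym hB; have hE' := compl_sym hE.
have [disE _] := hE; have [disE' _] := hE'.
have g1 : forall x, x \in C1 -> x \in W B1 -> t x \in W E1.
  by move=> x xC; move/forallP: gd => /(_ x); rewrite xC /= => /andP[/implyP].
have g2 : forall x, x \in C1 -> x \in W B2 -> t x \in W E2.
  by move=> x xC; move/forallP: gd => /(_ x); rewrite xC /= => /andP[_ /implyP].
have cond : forall X1 X2 Y1 Y2 : {set 'I_n}, compl X1 X2 -> compl Y1 Y2 ->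
    (forall x, x \in C1 -> x \in W X1 -> t x \in W Y1) ->
    (forall x, x \in C1 -> x \in W X2 -> t x \in W Y2) ->
    (forall v, Zb v = (v \in W X1) || (v \in W X2)) ->
    (forall v, Zb v = (v \in W Y1) || (v \in W Y2)) ->
    forall x, x \in C1 -> (P X1 x == 0) = (P Y1 (t x) == 0).
  move=> X1 X2 Y1 Y2 hX hY h1 h2 zX zY x xC.
  rewrite (P_eq0 _ hX) (P_eq0 _ hY); apply/idP/idP; first exact: h2.
  move=> txW; have : Zb x by rewrite -Zt // zY txW orbT.
  rewrite zX; case/orP => // xW.
  have /eqP : t x = 0 by apply: (WB_cap hY.1 (h1 _ xC xW) txW).
  by rewrite t0 // => /eqP ->; rewrite mem0v.
have zB : forall v, Zb v = (v \in W B1) || (v \in W B2) by [].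
have zB' : forall v, Zb v = (v \in W B2) || (v \in W B1) by move=> v; rewrite orbC.
have zE' : forall v, Zb v = (v \in W E2) || (v \in W E1) by move=> v; rewrite hZ orbC.
have linP : forall X : {set 'I_n}, linon C1 (P X) by move=> X a x y _ _; apply: P_lin.
have linPt : forall X : {set 'I_n}, linon C1 (fun x => P X (t x)).
  by move=> X a x y xC yC; rewrite lt // P_lin.
have [h1 [h1W h1inj h1e]] := ext (linP B1) (linPt E1) (fun x _ => P_W B1 x)
   (fun x _ => P_W E1 (t x)) (cond _ _ _ _ hB hE g1 g2 zB hZ) (etrans (dimWB _ _) (etrans c1 (esym (dimWB _ _)))).
have [h2 [h2W h2inj h2e]] := ext (linP B2) (linPt E2) (fun x _ => P_W B2 x)
   (fun x _ => P_W E2 (t x)) (cond _ _ _ _ hB' hE' g2 g1 zB' zE') (etrans (dimWB _ _) (etrans c2 (esym (dimWB _ _)))).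
pose T := fun v => h1 (P B1 v) + h2 (P B2 v).
have PT1 : forall v, P E1 (T v) = h1 (P B1 v).
  by move=> v; rewrite P_add (P_id (h1W _ (P_W _ _))) (P_0 disE (h2W _ (P_W _ _))) addr0.
have PT2 : forall v, P E2 (T v) = h2 (P B2 v).
  by move=> v; rewrite P_add (P_id (h2W _ (P_W _ _))) (P_0 disE' (h1W _ (P_W _ _))) add0r.
have T0 : forall v, (T v == 0) = (v == 0).
  move=> v; apply/eqP/eqP => [Tv|->]; last by rewrite /T !P0 !linear0 addr0.
  have e1 : P B1 v = 0 by apply: h1inj (P_W _ _) _; rewrite -PT1 Tv P0.
  have e2 : P B2 v = 0 by apply: h2inj (P_W _ _) _; rewrite -PT2 Tv P0.
  by rewrite (P_split v hB) e1 e2 addr0.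
have TW : forall (X1 X2 Y1 Y2 : {set 'I_n}) (h : {linear vec -> vec}), compl X1 X2 -> compl Y1 Y2 ->
    (forall w, w \in W X1 -> h w = 0 -> w = 0) ->
    (forall v, P Y1 (T v) = h (P X1 v)) ->
    forall v, (T v \in W Y2) = (v \in W X2).
  move=> X1 X2 Y1 Y2 h hX hY hinj PT v.
  rewrite -(P_eq0 _ hY) -(P_eq0 _ hX) PT; apply/eqP/eqP => [e|->]; last exact: linear0.
  exact: hinj (P_W _ _) e.
have TW2 := TW _ _ _ _ h1 hB hE h1inj PT1.
have TW1 := TW _ _ _ _ h2 hB' hE' h2inj PT2.
have Twt : forall v, wtF F (T v) = wtF F v.
  by move=> v; rewrite !wtE T0 hZ TW1 TW2.
have Tsub : forall u v, T (u - v) = T u - T v.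
  move=> u v; rewrite /T !P_sub !linearB /=.
  by rewrite opprD addrACA.
have Tinj : injective T.
  move=> u v e; apply/eqP; rewrite -subr_eq0 -T0 Tsub e subrr //.
exists T; split.
  split.
  - by move=> a u v; rewrite /T !P_lin !linearP /= scalerDr addrACA.
  - exact: injF_bij.
  by move=> u v; rewrite /dF -Tsub Twt.
move=> x xC; rewrite /T h1e // h2e //.
by rewrite -P_split.
Qed.

End Inner.

Lemma MEP2 : MacWilliams_EP K F.
Proof.
move=> C1 C2 t le.
have hB : compl B1 B2 by split.
case/orP: (good_or le) => gd.
  by apply: (build le hB hB) => // v.
apply: (build le hB (compl_sym hB)) => //.
by move=> v; rewrite /Zb orbC.
Qed.

End TwoBlocks.

End P7.
Import P7.

Unset Implicit Arguments.
Set Strict Implicit.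

Theorem proposition9 (K : finFieldType) (n : nat) (F : {set {set 'I_n}}) :
  (0 < n)%N ->
  is_covering F -> no_redundant F -> #|components F| = 2 ->
  (MacWilliams_EP K F <-> exists k : nat, k_partition k F).
Proof.
move=> n0 cov nr c2.
have [D0 D0F D0n0] : exists2 D, D \in F & D != set0.
  have : Ordinal n0 \in cover F by move/eqP: cov => ->; rewrite inE.
  by case/bigcupP => D DF iD; exists D => //; apply/set0Pn; exists (Ordinal n0).
have Fne : exists D, D \in F by exists D0.
have cov12 : forall B1 B2, F = [set B1; B2] -> B1 :|: B2 = setT.
  move=> B1 B2 eF; apply/setP => j; rewrite inE.
  have : j \in cover F by move/eqP: cov => ->; rewrite inE.
  case/bigcupP => D; rewrite eF !inE => /orP[]/eqP-> ->; rewrite ?orbT //.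
split.
  move=> MEP.
  have Fn0 : forall D, D \in F -> D != set0.
    move=> D DF; apply/negP => /eqP D0e.
    move/forall_inP: nr => /(_ D DF) /forall_inP /(_ D0 D0F).
    by rewrite D0e proper0 D0n0.
  have one : forall S, S \in components F -> forall a b, a \in S -> b \in S -> a = b.
    move=> S SC a b aS bS; apply/eqP; apply/negP => /negP ab.
    have [SF Sconn] := comp_sub SC.
    have [A [B [AS BS AB AB0]]] := conn_split Sconn aS bS ab.
    move/eqP: c2 => /cards2P[S1 [S2 [S12 eC]]].
    have [S' S'C S'S] : exists2 S', S' \in components F & S' != S.
      move: SC; rewrite eC !inE => /orP[]/eqP->; [exists S2 | exists S1];
        rewrite ?inE ?eqxx ?orbT // ?S12 // eq_sym S12 //.
    have [C CS' CS] : exists2 C, C \in S' & C \notin S.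
      apply/subsetPn; apply/negP => sub; move/negP: S'S; apply; apply/eqP.
      move: S'C; rewrite inE => /maxsetP[_ mx]; apply: esym; apply: (mx S) => //.
      by rewrite /= SF Sconn.
    have [S'F _] := comp_sub S'C.
    have CF : C \in F by apply: (subsetP S'F).
    have [c cC] := set0Pn _ (Fn0 C CF).
    apply: (caseb cov nr (subsetP SF _ AS) (subsetP SF _ BS) AB AB0 CF cC AS CS _ MEP).
    by move=> D1 D2 D1F D2F D1S D2S; apply: (comp_sep SC D1S D2F D2S).
  have [B1 [B2 [B12 eF dis]]] := two_blocks Fn0 Fne c2 one.
  have B1F : B1 \in F by rewrite eF !inE eqxx.
  have B2F : B2 \in F by rewrite eF !inE eqxx orbT.
  have [b bB1] := set0Pn _ (Fn0 _ B1F).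
  have [d dB2] := set0Pn _ (Fn0 _ B2F).
  case: (ltngtP #|B1| #|B2|) => cmp.
  - by exfalso; apply: (casea cov eF dis bB1 dB2 cmp MEP).
  - exfalso; apply: (casea (B1 := B2) (B2 := B1) cov _ _ dB2 bB1 cmp MEP).
      by rewrite eF setUC.
    by rewrite disjoint_sym.
  exists #|B1|; split.
    rewrite /partition; apply/and3P; split.
    - exact: cov.
    - apply/trivIsetP => X Y; rewrite eF !inE => /orP[]/eqP-> /orP[]/eqP->;
        rewrite ?eqxx // => _; by rewrite // disjoint_sym.
    - by apply/negP => /Fn0; rewrite eqxx.
  by move=> D; rewrite eF !inE => /orP[]/eqP->.
case=> k [part sz].
move: part; rewrite /partition => /and3P[_ triv s0F].
have Fn0 : forall D, D \in F -> D != set0.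
  by move=> D DF; apply: contraNneq s0F => <-.
have one : forall S, S \in components F -> forall a b, a \in S -> b \in S -> a = b.
  move=> S SC a b aS bS; apply/eqP; apply/negP => /negP ab.
  have [SF Sconn] := comp_sub SC.
  have [A [B [AS BS AB AB0]]] := conn_split Sconn aS bS ab.
  move/negP: AB0; apply.
  by move/trivIsetP: triv; apply => //; apply: (subsetP SF).
have [B1 [B2 [B12 eF dis]]] := two_blocks Fn0 Fne c2 one.
rewrite eF; apply: MEP2 => //.
  exact: cov12.
by rewrite !sz // eF !inE eqxx ?orbT.
Qed.
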